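(* Let $(C_*,\partial,\ell)$ be an ascending chain complex over a field $\kappa$ such that for every $k$ the filtered vector space $(C_k,\ell|_{C_k})$ satisfies the best approximation property. Then there are subcomplexes $A_*$ and $\mathcal{H}_*$ of $C_*$ such that: (1) for each $k$, $C_k=A_k\oplus\mathcal{H}_k$ and $\ell(a+h)=\max\{\ell(a),\ell(h)\}$ for all $a\in A_k$, $h\in\mathcal{H}_k$; (2) $\partial|_{\mathcal{H}_*}=0$, and for each $k$ the restriction to $\mathcal{H}_k$ of the projection $\ker\partial|_{C_k}\to H_k(C_* )$ is an isomorphism of filtered vector spaces $(\mathcal{H}_k,\ell|_{\mathcal{H}_k})\to(H_k(C_* ),\rho|_{H_k(C_* )})$, where $\rho$ is the spectral invariant function; (3) $H_k(A_* )=0$ for all $k$.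
   Context: An ascending chain complex over $\kappa$ is a triple $(C_*,\partial,\ell)$ where $(C_*=\bigoplus_{k\in\mathbb{Z}}C_k,\partial)$ is a chain complex of $\kappa$-vector spaces and $\ell\colon C_*\to\mathbb{R}\cup\{-\infty\}$ satisfies: $\ell(x)=-\infty$ iff $x=0$; $\ell(\sum_i c_ix_i)\le\max\{\ell(x_i): c_i\neq 0\}$, with equality if the $x_i$ lie in pairwise distinct degrees; and $\ell(\partial x)\le\ell(x)$. A filtered vector space $(V,\ell)$ (with $\ell(v)=-\infty$ iff $v=0$, $\ell(cv)=\ell(v)$ for $c\ne0$, $\ell(v+w)\le\max\{\ell(v),\ell(w)\}$) satisfies the best approximation property if for every proper subspace $W\subsetneq V$ and every $v\in V\setminus W$ there is $w_0\in W$ with $\ell(v-w_0)\le\ell(v-w)$ for all $w\in W$. The spectral invariant function $\rho\colon H_*(C_* )\to\mathbb{R}\cup\{-\infty\}$ is $\rho(h)=\inf\{\ell(c): c\in\ker\partial,\ [c]=h\}$. *)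

(* Defs.v *)
From HB Require Import structures.
From mathcomp Require Import all_boot all_order all_algebra.
From mathcomp Require Import boolp classical_sets reals constructive_ereal ereal.
Set Implicit Arguments. Unset Strict Implicit. Unset Printing Implicit Defensive.
Import Order.TTheory GRing.Theory Num.Theory.
Local Open Scope classical_set_scope.
Local Open Scope ring_scope.

(* A graded chain complex over a field K is given degreewise:
   C k  is the degree-k space (k : int), and  d k : C (k+1) -> C k  is the
   differential out of degree k+1 (so every degree is of the form k+1). *)

Section Defs.
Variables (K : fieldType) (R : realType).

Definition subspace (V : lmodType K) (S : set V) : Prop :=
  S 0 /\ forall (a : K) (x y : V), S x -> S y -> S (a *: x + y).

Definition filtered (V : lmodType K) (l : V -> \bar R) : Prop :=
  (forall v, l v != +oo%E) /\
  (forall v, l v = -oo%E <-> v = 0) /\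
  (forall (c : K) v, c != 0 -> l (c *: v) = l v) /\
  (forall v w, (l (v + w)%R <= maxe (l v) (l w))%E).

Definition best_approximation (V : lmodType K) (l : V -> \bar R) : Prop :=
  forall (W : set V), subspace W -> W != setT ->
  forall v, ~ W v ->
  exists2 w0, W w0 & forall w, W w -> (l (v - w0)%R <= l (v - w)%R)%E.

Definition ascending_chain_complex (C : int -> lmodType K)
  (d : forall k : int, {linear C (k + 1) -> C k})
  (l : forall k : int, C k -> \bar R) : Prop :=
  [/\ forall k (x : C (k + 1 + 1)), d k (d (k + 1) x) = 0,
      forall k, filtered (l k)
    & forall k (x : C (k + 1)), (l k (d k x) <= l (k + 1)%R x)%E].

Section Complex.
Variables (C : int -> lmodType K) (d : forall k : int, {linear C (k + 1) -> C k}).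

Definition cx_cycle (k : int) (z : C (k + 1)) : Prop := d k z = 0.
Definition cx_boundary (k : int) (z : C (k + 1)) : Prop :=
  exists b : C (k + 1 + 1), d (k + 1) b = z.
Definition homologous (k : int) (z w : C (k + 1)) : Prop := cx_boundary (z - w).

Definition spec_inv (l : forall k : int, C k -> \bar R) (k : int) (z : C (k + 1))
  : \bar R :=
  ereal_inf [set l (k + 1) c | c in [set c | cx_cycle c /\ homologous c z]].

Definition subcomplex (S : forall k : int, set (C k)) : Prop :=
  (forall k, subspace (S k)) /\ (forall k x, S (k + 1) x -> S k (d k x)).

Definition direct_sum (k : int) (A H : set (C k)) : Prop :=
  (forall x, exists a h, [/\ A a, H h & x = a + h]) /\
  (forall x, A x -> H x -> x = 0).

(* restriction to Hs (k+1) (a space of cycles) of the projection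
   ker d_k -> H_{k+1}(C) is an isomorphism of filtered vector spaces onto
   (H_{k+1}(C), rho): it is surjective, injective, and l = rho on Hs. *)
Definition homology_filtered_iso (l : forall k : int, C k -> \bar R)
  (k : int) (Hs : set (C (k + 1))) : Prop :=
  [/\ forall z, cx_cycle z -> exists2 h, Hs h & homologous z h,
      forall h1 h2, Hs h1 -> Hs h2 -> homologous h1 h2 -> h1 = h2
    & forall h, Hs h -> l (k + 1) h = spec_inv l h].

Definition acyclic_at (A : forall k : int, set (C k)) (k : int) : Prop :=
  forall a, A (k + 1) a -> cx_cycle a ->
  exists2 b, A (k + 1 + 1) b & d (k + 1) b = a.

End Complex.
End Defs.

(* Main.v *)
Require Import Defs.
From HB Require Import structures.
From mathcomp Require Import all_boot all_order all_algebra.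
From mathcomp Require Import boolp classical_sets reals constructive_ereal ereal.
Import Order.TTheory GRing.Theory Num.Theory.
Set Implicit Arguments. Unset Strict Implicit.
Local Open Scope classical_set_scope.
Local Open Scope ring_scope.

Section Abs.
Variables (K : fieldType) (R : realType) (V : lmodType K) (l : V -> \bar R).
Hypotheses (Hf : filtered l) (Hb : best_approximation l).

Lemma sub0 (Y : set V) : Defs.subspace Y -> Y 0.
Proof. by rewrite /Defs.subspace; case. Qed.
Lemma subL (Y : set V) a x y : Defs.subspace Y -> Y x -> Y y -> Y (a *: x + y).
Proof. by rewrite /Defs.subspace; case=> _ H; apply: H. Qed.
Lemma subZ (Y : set V) a x : Defs.subspace Y -> Y x -> Y (a *: x).
Proof. by move=> HY Yx; rewrite -[_ *: x]addr0; apply: subL => //; apply: sub0. Qed.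
Lemma subD (Y : set V) x y : Defs.subspace Y -> Y x -> Y y -> Y (x + y).
Proof. by move=> HY Yx Yy; rewrite -[x]scale1r; apply: subL. Qed.
Lemma subN (Y : set V) x : Defs.subspace Y -> Y x -> Y (- x).
Proof. by move=> HY Yx; rewrite -scaleN1r; apply: subZ. Qed.
Lemma subB (Y : set V) x y : Defs.subspace Y -> Y x -> Y y -> Y (x - y).
Proof. by move=> HY Yx Yy; apply: subD => //; apply: subN. Qed.

Definition orth (W U : set V) :=
  forall w u, W w -> U u -> l (w + u) = maxe (l w) (l u).

Lemma l0 : l 0 = -oo%E.
Proof. by case: Hf => _ [H _]; apply (H _). Qed.

Lemma l_eq0 v : l v = -oo%E -> v = 0.
Proof. by case: Hf => _ [H _]; apply (H _). Qed.

Lemma lZ c v : c != 0 -> l (c *: v) = l v.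
Proof. by case: Hf => _ [_ [H _]]; apply: H. Qed.

Lemma lN v : l (- v) = l v.
Proof. by rewrite -scaleN1r lZ // oppr_eq0 oner_neq0. Qed.

Lemma lD v w : (l (v + w) <= maxe (l v) (l w))%E.
Proof. by case: Hf => _ [_ [_ H]]; apply: H. Qed.

Lemma key (Y : set V) m : Defs.subspace Y -> (forall y, Y y -> (l m <= l (m + y))%E) ->
  forall y, Y y -> l (m + y) = maxe (l m) (l y).
Proof.
move=> HY Hm y Yy; apply/le_anti/andP; split; first exact: lD.
rewrite ge_max Hm //=.
have -> : l y = l ((m + y) + (- m)) by rewrite addrC addKr.
apply: (le_trans (lD _ _)); rewrite lN ge_max lexx /=.
exact: Hm.
Qed.

Lemma keyc (Y : set V) m c : Defs.subspace Y -> (forall y, Y y -> (l m <= l (m + y))%E) ->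
  forall y, Y y -> l (c *: m + y) = maxe (l (c *: m)) (l y).
Proof.
move=> HY Hm y Yy; have [->|c0] := eqVneq c 0.
  by rewrite scale0r add0r l0 (max_idPr (leNye _)).
have -> : c *: m + y = c *: (m + c^-1 *: y) by rewrite scalerDr scalerA divff // scale1r.
rewrite !lZ // (key HY Hm); last exact: subZ.
by rewrite lZ // invr_eq0.
Qed.

Lemma orth_compl (S W : set V) : Defs.subspace S -> Defs.subspace W -> W `<=` S ->
  exists U, [/\ Defs.subspace U, U `<=` S, orth W U &
    forall x, S x -> exists w u, [/\ W w, U u & x = w + u]].
Proof.
move=> HS HW WS.
pose P := fun U : set V => [/\ U `<=` S, orth W U &
   forall a x y, U x -> U y -> U (a *: x + y)].
have [U [[US oWU cU] Umax]] : exists U, P U /\ forall B, U `<` B -> ~ P B.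
  apply: Zorn_bigcup => F FP Ftot; split.
  - move=> x [X FX Xx]; by have [XS _ _] := FP X FX; apply: XS.
  - by move=> w u Ww [X FX Xu]; have [_ o _] := FP X FX; apply: o.
  - move=> a x y [X FX Xx] [Y FY Yy]; have [XY|YX] := Ftot X Y FX FY.
    + by exists Y => //; have [_ _ c] := FP Y FY; apply: c => //; apply: XY.
    + by exists X => //; have [_ _ c] := FP X FX; apply: c => //; apply: YX.
have U0 : U 0.
  apply: contrapT => nU0; apply: (Umax [set 0]); split.
  - move=> x Ux; exfalso; apply: nU0.
    by have := cU (-1) x x Ux Ux; rewrite scaleN1r addNr.
  - by move=> h; apply: nU0; apply: h.
  - by move=> x ->; apply: sub0.
  - by move=> w u Ww ->; rewrite addr0 l0 (max_idPl (leNye _)).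
  - by move=> a x y -> ->; rewrite scaler0 addr0.
have HU : Defs.subspace U by split.
exists U; split => //.
move=> x Sx; apply: contrapT => nx.
pose Y := [set y | exists w u, [/\ W w, U u & y = w + u]].
have HY : Defs.subspace Y.
  split; first by exists 0, 0; split; rewrite ?addr0 //; apply: sub0.
  move=> a _ _ [w1 [u1 [W1 U1 ->]]] [w2 [u2 [W2 U2 ->]]].
  exists (a *: w1 + w2), (a *: u1 + u2); split; [exact: subL|exact: subL|].
  by rewrite scalerDr addrACA.
have YS : Y `<=` S.
  by move=> _ [w [u [Ww Uu ->]]]; apply: subD => //; [apply: WS|apply: US].
have nYx : ~ Y x by [].
have YT : Y != setT by apply/eqP => YT; apply: nYx; rewrite YT.
have [y0 Yy0 Hy0] := Hb HY YT nYx.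
pose m := x - y0.
have Hm : forall y, Y y -> (l m <= l (m + y))%E.
  move=> y Yy; have -> : m + y = x - (y0 - y) by rewrite /m opprB addrA addrAC.
  by apply: Hy0; apply: subB.
pose B := [set v | exists u c, U u /\ v = u + c *: m].
apply: (Umax B); split.
- by move=> u Uu; exists u, 0; rewrite scale0r addr0.
- move=> BU; have : U m by apply: BU; exists 0, 1; rewrite scale1r add0r.
  move=> Um; apply: nYx; case: Yy0 => w [u [Ww Uu e]].
  exists w, (u + m); split => //; first exact: subD.
  by rewrite addrA -e /m addrC addrNK.
- move=> _ [u [c [Uu ->]]]; apply: subD => //; first exact: US.
  by apply: subZ => //; apply: subB => //; apply: YS.
- move=> w _ Ww [u [c [Uu ->]]].
  have Yu : Y u by exists 0, u; rewrite add0r; split => //; apply: sub0.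
  have Ywu : Y (w + u) by exists w, u.
  rewrite addrA addrC (keyc _ HY Hm Ywu) oWU // addrC (keyc _ HY Hm Yu).
  by rewrite maxCA.
- move=> a _ _ [u1 [c1 [U1 ->]]] [u2 [c2 [U2 ->]]].
  exists (a *: u1 + u2), (a * c1 + c2); split; first exact: cU.
  by rewrite scalerDr scalerA scalerDl addrACA.
Qed.

Lemma orth_inter (W U : set V) x : orth W U -> Defs.subspace U -> W x -> U x -> x = 0.
Proof.
move=> oWU HU Wx Ux; have := oWU x (- x) Wx (subN HU Ux).
by rewrite subrr l0 lN maxxx => /esym/l_eq0.
Qed.

End Abs.

Section Main.
Variables (K : fieldType) (R : realType) (C : int -> lmodType K)
  (d : forall k : int, {linear C (k + 1) -> C k}).

Definition Bs k : set (C k) := [set d k x | x in setT].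
Definition Zs k : set (C k) :=
  fun z => forall j (e : k = j + 1), d j (eq_rect k C z (j + 1) e) = 0.
Arguments Zs k : clear implicits.
Arguments Bs k : clear implicits.

Lemma ZsE k z : Zs (k + 1) z <-> d k z = 0.
Proof.
split => [H | H j e]; first exact: (H k erefl).
have ejk : j = k by apply: (addIr 1); rewrite -e.
by subst j; rewrite (eq_irrelevance e erefl).
Qed.

Lemma Zs_sub k : Defs.subspace (Zs k).
Proof.
split; first by move=> j e; subst k; rewrite /= linear0.
move=> a x y Hx Hy j e; subst k; have := Hx j erefl; have := Hy j erefl.
by rewrite /= => hy hx; rewrite linearP hx hy scaler0 addr0.
Qed.

Lemma Bs_sub k : Defs.subspace (Bs k).
Proof.
split; first by exists 0 => //; rewrite linear0.
move=> a _ _ [x _ <-] [y _ <-]; exists (a *: x + y) => //.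
by rewrite linearP.
Qed.

Lemma BZ k : (forall k (x : C (k + 1 + 1)), d k (d (k + 1) x) = 0) ->
  Bs k `<=` Zs k.
Proof. by move=> Hdd _ [x _ <-] j e; subst k; apply: Hdd. Qed.


Lemma main_lemma (l : forall k : int, C k -> \bar R) :
  ascending_chain_complex d l ->
  (forall k, best_approximation (l k)) ->
  exists (A Hs : forall k : int, set (C k)),
    [/\ subcomplex d A, subcomplex d Hs,
        (forall k, direct_sum (A k) (Hs k) /\
           forall a h, A k a -> Hs k h -> l k (a + h) = maxe (l k a) (l k h)),
        (forall k h, Hs (k + 1) h -> d k h = 0) /\
        (forall k, homology_filtered_iso d l (Hs (k + 1)))
      & forall k, acyclic_at d A k].
Proof.
move=> [Hdd Hfl Hle] Hba.
have H1 : forall k, exists U : set (C k), [/\ Defs.subspace U, U `<=` Zs k,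
    orth (l k) (Bs k) U &
    forall x, Zs k x -> exists w u, [/\ Bs k w, U u & x = w + u]].
  move=> k; apply: (orth_compl (Hfl k) (Hba k)); [exact: Zs_sub|exact: Bs_sub|exact: BZ].
have H2 : forall k, exists U : set (C k), [/\ Defs.subspace U, U `<=` setT,
    orth (l k) (Zs k) U &
    forall x, setT x -> exists w u, [/\ Zs k w, U u & x = w + u]].
  move=> k; apply: (orth_compl (Hfl k) (Hba k)); [by split|exact: Zs_sub|by []].
pose Hs k := proj1_sig (cid (H1 k)).
pose A' k := proj1_sig (cid (H2 k)).
have HsP k := proj2_sig (cid (H1 k)).
have A'P k := proj2_sig (cid (H2 k)).
rewrite -/(Hs _) in HsP; rewrite -/(A' _) in A'P.
pose A k : set (C k) := [set v | exists b a, [/\ Bs k b, A' k a & v = b + a]].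
have Hs_sub k : Defs.subspace (Hs k) by case: (HsP k).
have A'_sub k : Defs.subspace (A' k) by case: (A'P k).
have HsZ k : Hs k `<=` Zs k by case: (HsP k).
have oH k : orth (l k) (Bs k) (Hs k) by case: (HsP k).
have oA k : orth (l k) (Zs k) (A' k) by case: (A'P k).
have A_sub k : Defs.subspace (A k).
  split; first by exists 0, 0; split; rewrite ?addr0 //; [exact: sub0 (Bs_sub k)|exact: sub0].
  move=> a _ _ [b1 [a1 [B1 A1 ->]]] [b2 [a2 [B2 A2 ->]]].
  exists (a *: b1 + b2), (a *: a1 + a2); split; [exact: subL (Bs_sub k) _ _|exact: subL|].
  by rewrite scalerDr addrACA.
have Hsd k h : Hs (k + 1) h -> d k h = 0 by move=> /HsZ /ZsE.
have span k x : exists a h, [/\ A k a, Hs k h & x = a + h].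
  have [_ _ _ /(_ x I) [z [a' [Zz Aa' ->]]]] := A'P k.
  have [_ _ _ /(_ z Zz) [b [h [Bb Hh ->]]]] := HsP k.
  exists (b + a'), h; split => //; first by exists b, a'.
  by rewrite addrAC.
have orthAH k a h : A k a -> Hs k h -> l k (a + h) = maxe (l k a) (l k h).
  move=> [b [a' [Bb Aa' ->]]] Hh.
  have Zbh : Zs k (b + h) := @subD _ _ _ b h (Zs_sub k) (BZ Hdd Bb) (HsZ k _ Hh).
  rewrite addrAC (oA _ _ _ Zbh Aa') (oH _ _ _ Bb Hh) (oA _ _ _ (BZ Hdd Bb) Aa').
  by rewrite maxAC.
exists A, Hs; split.
- split => // k x _; exists (d k x), 0; split; [by exists x|exact: sub0|by rewrite addr0].
- split => // k x /Hsd ->; exact: sub0.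
- move=> k; split; last exact: orthAH.
  split; first exact: span.
  move=> x Ax Hx; have := orthAH k x (- x) Ax (subN (Hs_sub k) Hx).
  rewrite subrr (l0 (Hfl k)) (lN (Hfl k)) maxxx.
  by move=> /esym; apply: l_eq0; apply: Hfl.
- split => // k; split.
  + move=> z /ZsE Zz; have [_ _ _ /(_ z Zz) [_ [h [[c _ <-] Hh ->]]]] := HsP (k + 1).
    by exists h => //; exists c; rewrite addrK.
  + move=> h1 h2 H1h H2h [b eb]; apply/eqP; rewrite -subr_eq0; apply/eqP.
    apply: (orth_inter (Hfl (k + 1)) (oH (k + 1))) => //; first by exists b.
    exact: subB.
  + move=> h Hh; rewrite /spec_inv; apply/le_anti/andP; split.
    * apply: le_ereal_inf_tmp => _ [c [cc [b eb]] <-].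
      have -> : c = (c - h) + h by rewrite subrK.
      rewrite (oH (k + 1) _ _ _ Hh); last by exists b.
      by rewrite le_max lexx orbT.
    * apply: ereal_inf_lbound; exists h => //; split; first exact: Hsd.
      by exists 0; rewrite linear0 subrr.
- move=> k a [b [a' [[c _ eb] Aa' ea]]] /ZsE Za.
  have Za' : Zs (k + 1) a'.
    have -> : a' = a - b by rewrite ea [b + a']addrC addrK.
    have Bb : Bs (k + 1) b by exists c.
    exact: (@subB _ _ _ a b (Zs_sub (k + 1)) Za (BZ Hdd Bb)).
  have a'0 := orth_inter (Hfl (k + 1)) (oA (k + 1)) (A'_sub _) Za' Aa'.
  have [ca [ch [Aca Hch ec]]] := span (k + 1 + 1) c.
  exists ca => //; rewrite ea a'0 -eb ec linearD (Hsd _ _ Hch).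
  by rewrite !GRing.addr0.
Qed.

End Main.

Unset Implicit Arguments.

Theorem proposition3p12 (K : fieldType) (R : realType)
  (C : int -> lmodType K) (d : forall k : int, {linear C (k + 1) -> C k})
  (l : forall k : int, C k -> \bar R) :
  ascending_chain_complex d l ->
  (forall k, best_approximation (l k)) ->
  exists (A Hs : forall k : int, set (C k)),
    [/\ subcomplex d A, subcomplex d Hs,
        (forall k, direct_sum (A k) (Hs k) /\
           forall a h, A k a -> Hs k h -> l k (a + h) = maxe (l k a) (l k h)),
        (forall k h, Hs (k + 1) h -> d k h = 0) /\
        (forall k, homology_filtered_iso d l (Hs (k + 1)))
      & forall k, acyclic_at d A k].
Proof. exact: main_lemma. Qed.
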